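(* If $D\subseteq\mathcal M^d$ is an nc-domain, then its envelope $D^\sim$ is an nc-domain.
   Context: $\mathcal M^d=\bigcup_n\mathcal M_n^d$. An nc-set is a subset of $\mathcal M^d$ closed under direct sums and unitary conjugation; an nc-domain is an nc-set $D$ with $D\cap\mathcal M_n^d$ open in $\mathcal M_n^d$ for each $n$. A set $B$ is invariant if $S^{-1}(B\cap\mathcal M_n^d)S\subseteq B$ for all $n$ and invertible $S\in\mathcal M_n$. The envelope $D^\sim$ is the smallest invariant nc-set containing $D$. *)

(* Defs.v *)
From HB Require Import structures.
From mathcomp Require Import all_boot all_order all_algebra.
From mathcomp Require Import complex.
From mathcomp Require Import reals.
Set Implicit Arguments. Unset Strict Implicit. Unset Printing Implicit Defensive.
Import Order.TTheory GRing.Theory Num.Theory.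
Local Open Scope ring_scope.

(* A point of M^d = \bigcup_n M_n^d : a size n together with a d-tuple of
   n x n complex matrices. *)
Definition ncpt (R : realType) (d : nat) : Type :=
  {n : nat & 'I_d -> 'M[R[i]]_n}.

Definition ncpred (R : realType) (d : nat) := ncpt R d -> Prop.

Definition ncdsum (R : realType) (d n m : nat)
  (X : 'I_d -> 'M[R[i]]_n) (Y : 'I_d -> 'M[R[i]]_m) : 'I_d -> 'M[R[i]]_(n + m) :=
  fun k => block_mx (X k) 0 0 (Y k).

Definition adjmx (R : realType) (n : nat) (U : 'M[R[i]]_n) : 'M[R[i]]_n :=
  (map_mx Num.conj U)^T.

Definition unitary (R : realType) (n : nat) (U : 'M[R[i]]_n) : Prop :=
  adjmx U *m U = 1%:M /\ U *m adjmx U = 1%:M.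

Definition ncsim (R : realType) (d n : nat) (S : 'M[R[i]]_n)
  (X : 'I_d -> 'M[R[i]]_n) : 'I_d -> 'M[R[i]]_n :=
  fun k => invmx S *m X k *m S.

Definition ncset (R : realType) (d : nat) (D : ncpred R d) : Prop :=
  (forall n m (X : 'I_d -> 'M[R[i]]_n) (Y : 'I_d -> 'M[R[i]]_m),
      D (existT _ n X) -> D (existT _ m Y) ->
      D (existT _ (n + m)%N (ncdsum X Y))) /\
  (forall n (X : 'I_d -> 'M[R[i]]_n) (U : 'M[R[i]]_n),
      unitary U -> D (existT _ n X) ->
      D (existT _ n (fun k => adjmx U *m X k *m U))).

(* D \cap M_n^d is open in M_n^d = (C^{n x n})^d, with its usual (Euclidean)
   topology, here described by the equivalent entrywise max-norm balls. *)
Definition level_open (R : realType) (d : nat) (D : ncpred R d) (n : nat) : Prop :=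
  forall X : 'I_d -> 'M[R[i]]_n, D (existT _ n X) ->
    exists eps : R, 0 < eps /\
      forall Y : 'I_d -> 'M[R[i]]_n,
        (forall k i j, `|Y k i j - X k i j| < (eps%:C)%C) -> D (existT _ n Y).

Definition ncdomain (R : realType) (d : nat) (D : ncpred R d) : Prop :=
  ncset D /\ forall n, level_open D n.

Definition invariant (R : realType) (d : nat) (B : ncpred R d) : Prop :=
  forall n (X : 'I_d -> 'M[R[i]]_n) (S : 'M[R[i]]_n),
    S \in unitmx -> B (existT _ n X) -> B (existT _ n (ncsim S X)).

Definition envelope (R : realType) (d : nat) (D : ncpred R d) : ncpred R d :=
  fun P => forall B : ncpred R d,
    ncset B -> invariant B -> (forall Q, D Q -> B Q) -> B P.

(* Main.v *)
Require Import Defs.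
From mathcomp Require Import all_boot all_order all_algebra complex reals ring.
From Stdlib Require Import FunctionalExtensionality.
Set Implicit Arguments. Unset Strict Implicit. Unset Printing Implicit Defensive.
Import Order.TTheory GRing.Theory Num.Theory.
Local Open Scope ring_scope.

Lemma entry_bound (R : realType) n (S Z T : 'M[R[i]]_n) (M e : R[i]) :
  (forall i j, `|S i j| <= M) -> (forall i j, `|T i j| <= M) ->
  (forall i j, `|Z i j| <= e) ->
  forall i j, `|(S *m Z *m T) i j| <= n%:R * (n%:R * (M * e)) * M.
Proof.
move=> hS hT hZ i j.
have M0 : 0 <= M by apply: le_trans (hS i j).
have e0 : 0 <= e by apply: le_trans (hZ i j).
rewrite mxE; apply: le_trans (ler_norm_sum _ _ _) _.
apply: le_trans (ler_sum _ (G := fun _ => n%:R * (M * e) * M) _) _.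
  move=> b _; rewrite normrM; apply: ler_pM => //.
  rewrite mxE; apply: le_trans (ler_norm_sum _ _ _) _.
  apply: le_trans (ler_sum _ (G := fun _ => M * e) _) _.
    by move=> c _; rewrite normrM; apply: ler_pM.
  by rewrite sumr_const card_ord mulr_natl.
by rewrite sumr_const card_ord -[_ *+ n]mulr_natl !mulrA.
Qed.

Lemma term_le_sum (R : realType) n (F : 'I_n -> 'I_n -> R[i]) i j :
  (forall i j, 0 <= F i j) -> F i j <= \sum_a \sum_b F a b.
Proof.
move=> F0; rewrite (bigD1 i) //= (bigD1 j) //= -addrA lerDl.
apply: addr_ge0; apply: sumr_ge0 => a _ //; exact: sumr_ge0.
Qed.

Lemma real_of_ge0 (R : realType) (K : R[i]) : 0 <= K -> K = ((complex.Re K)%:C)%C.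
Proof.
move=> K0; rewrite [LHS]complexE (ger0_Im K0) mulr0 addr0 //.
Qed.

Definition simE (R : realType) (d : nat) (D : ncpred R d) : ncpred R d :=
  fun P => match P with existT n Y =>
    exists (X : 'I_d -> 'M[R[i]]_n) (S T : 'M[R[i]]_n),
    D (existT _ n X) /\ S *m T = 1%:M /\ T *m S = 1%:M /\
    Y = (fun k => T *m X k *m S) end.

Lemma simE_ncset (R : realType) (d : nat) (D : ncpred R d) :
  ncset D -> ncset (simE D).
Proof.
case=> Hsum Hun; split.
- move=> n m X Y [X' [S1 [T1 [HD1 [ST1 [TS1 HX]]]]]]
    [Y' [S2 [T2 [HD2 [ST2 [TS2 HY]]]]]]; simpl in HX, HY. subst X Y.
  exists (ncdsum X' Y'), (block_mx S1 0 0 S2), (block_mx T1 0 0 T2); split => /=.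
    exact: Hsum.
  rewrite !mulmx_block !mulmx0 !mul0mx !addr0 !add0r ST1 ST2 TS1 TS2 scalar_mx_block.
  split => //; split => //.
  apply: functional_extensionality => k.
  by rewrite /ncdsum !mulmx_block !mulmx0 !mul0mx !addr0 !add0r !mul0mx.
- move=> n X U [HU1 HU2] [X' [S [T [HD [ST [TS HX]]]]]]; simpl in HX; subst X.
  exists X', (S *m U), (adjmx U *m T); split => //=.
  split; first by rewrite mulmxA -(mulmxA S) HU2 mulmx1 ST.
  split; first by rewrite mulmxA -(mulmxA _ T) TS mulmx1 HU1.
  by apply: functional_extensionality => k; rewrite !mulmxA.
Qed.

Lemma simE_inv (R : realType) (d : nat) (D : ncpred R d) : Defs.invariant (simE D).
Proof.
move=> n X S0 HS0 [X' [S [T [HD [ST [TS HX]]]]]]; simpl in HX; subst X.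
exists X', (S *m S0), (invmx S0 *m T); split => //=.
split; first by rewrite mulmxA -(mulmxA S) (mulmxV HS0) mulmx1 ST.
split; first by rewrite mulmxA -(mulmxA _ T) TS mulmx1 (mulVmx HS0).
by apply: functional_extensionality => k; rewrite /ncsim !mulmxA.
Qed.

Lemma simE_D (R : realType) (d : nat) (D : ncpred R d) P : D P -> simE D P.
Proof.
case: P => n X HD; exists X, 1%:M, 1%:M; split => //=.
split; first exact: mulmx1. split; first exact: mulmx1.
by apply: functional_extensionality => k; rewrite mul1mx mulmx1.
Qed.

Lemma env_ncset (R : realType) (d : nat) (D : ncpred R d) : ncset (envelope D).
Proof.
split.
- move=> n m X Y HX HY B HB HBi HDB.
  exact: HB.1 (HX B HB HBi HDB) (HY B HB HBi HDB).
- move=> n X U HU HX B HB HBi HDB.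
  exact: HB.2 _ _ _ HU (HX B HB HBi HDB).
Qed.

Lemma env_inv (R : realType) (d : nat) (D : ncpred R d) : Defs.invariant (envelope D).
Proof.
move=> n X S HS HX B HB HBi HDB; exact: HBi _ _ _ HS (HX B HB HBi HDB).
Qed.

Lemma env_D (R : realType) (d : nat) (D : ncpred R d) P : D P -> envelope D P.
Proof. by move=> HP B _ _ HDB; apply: HDB. Qed.

Theorem proposition3p6 (R : realType) (d : nat) (D : ncpred R d) :
  ncdomain D -> ncdomain (envelope D).
Proof.
move=> [HDs HDo]; split; first exact: env_ncset.
move=> n Y HY.
have : simE D (existT _ n Y).
  exact: HY _ (simE_ncset HDs) (@simE_inv _ _ D) (@simE_D _ _ D).
case=> X [S [T [HD [ST [TS HYe]]]]]; subst Y.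
have [eps [eps0 Hball]] := HDo n X HD.
pose M : R[i] := 1 + \sum_a \sum_b (`|S a b| + `|T a b|).
have hS : forall a b, `|S a b| <= M.
  move=> a b; apply: ler_wpDl => //.
  apply: le_trans (term_le_sum (F := fun a b => `|S a b| + `|T a b|) a b _).
    by rewrite lerDl.
  by move=> ? ?; apply: addr_ge0.
have hT : forall a b, `|T a b| <= M.
  move=> a b; apply: ler_wpDl => //.
  apply: le_trans (term_le_sum (F := fun a b => `|S a b| + `|T a b|) a b _).
    by rewrite lerDr.
  by move=> ? ?; apply: addr_ge0.
have M0 : 0 <= M.
  apply: addr_ge0 => //; apply: sumr_ge0 => a _; apply: sumr_ge0 => b _.
  exact: addr_ge0.
clearbody M.
pose K : R[i] := 1 + n%:R * (n%:R * M) * M.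
have K0 : 0 < K.
  rewrite /K; apply: ltr_wpDr => //; apply: mulr_ge0 => //; apply: mulr_ge0 => //. apply: mulr_ge0 => //.
pose Kr := complex.Re K.
have HK : K = (Kr%:C)%C := real_of_ge0 (ltW K0).
have Kr0 : 0 < Kr by rewrite -ltcR -HK.
pose delta := eps / Kr.
have delta0 : 0 < delta by apply: divr_gt0.
exists delta; split => // Y' HY'.
pose X' := fun k => S *m Y' k *m T.
have uS : S \in unitmx := (mulmx1_unit ST).1.
have HDX' : D (existT _ n X').
  apply: Hball => k i j.
  have E : X k = S *m (T *m X k *m S) *m T.
    by rewrite !mulmxA ST mul1mx -!mulmxA ST mulmx1.
  have -> : X' k i j - X k i j = (S *m (Y' k - T *m X k *m S) *m T) i j.
    by rewrite /X' mulmxBr mulmxBl -E !mxE.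
  apply: le_lt_trans (entry_bound (e := (delta%:C)%C) hS hT _ i j) _.
    move=> a b; have := HY' k a b; rewrite !mxE => h; exact: ltW h.
  have -> : (eps%:C)%C = K * (delta%:C)%C.
    rewrite HK /delta rmorphM fmorphV mulrCA mulfV ?mulr1 //.
    by rewrite -HK; apply: lt0r_neq0.
  have c0 : 0 < (delta%:C)%C by rewrite ltcR.
  rewrite /K mulrDl mul1r.
  have -> : n%:R * (n%:R * (M * (delta%:C)%C)) * M
            = n%:R * (n%:R * M) * M * (delta%:C)%C by ring.
  by rewrite ltrDr.
have := env_inv uS (env_D HDX').
have iS : invmx S = T.
  by rewrite -[T]mul1mx -(mulVmx uS) -mulmxA ST mulmx1.
congr (envelope D (existT _ n _)).
apply: functional_extensionality => k.
by rewrite /ncsim /X' iS !mulmxA TS mul1mx -mulmxA TS mulmx1.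
Qed.
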